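(* Let $\lambda_j\ge 0$ ($j=1,\dots,k$), not all zero, and $\gamma_i>0$ ($i=1,\dots,n$). Let $(\{\hat\theta'_i\}_{i=1}^n,\{\hat w_j\}_{j=1}^k,\hat{\bar w})$ be a minimizer of $$F_{MTL}(\{\theta_i\},\{w_j\},\bar w)=\sum_{j=1}^k\Big(\sum_{i\in\mathcal I_j}\Big(f_i(\theta_i)+\frac{\gamma_i}{2}\|\theta_i-w_j\|^2\Big)+\frac{\lambda_j}{2}\|w_j-\bar w\|^2\Big)$$ over $\theta_i\in\mathbb R^d$, $w_j\in\mathbb R^d$, $\bar w\in\mathbb R^d$. Set $\alpha_j=\frac{\lambda_j}{\lambda_j+\sum_{i\in\mathcal I_j}\gamma_i}$ for $j=1,\dots,k$, and let $\{\hat\theta_i\}_{i=1}^n$ be the unique minimizer of the objective $F$ (defined in the context) with these $\alpha_j$ and $\gamma_i$. Then $\hat\theta_i=\hat\theta'_i$ for all $i=1,\dots,n$.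
   Context: Clients $1,\dots,n$ are partitioned into nonempty disjoint clusters $\mathcal I_1,\dots,\mathcal I_k$; $d\ge1$. Each $f_i:\mathbb R^d\to\mathbb R$ is differentiable, $\mu$-strongly convex and $L$-smooth ($0<\mu\le L$). Given weights $\gamma_i>0$ and $\alpha_j\in[0,1]$ (not all $\alpha_j=0$), for $\Theta=(\theta_1,\dots,\theta_n)$ define $\bar\theta_j=\frac{\sum_{i\in\mathcal I_j}\gamma_i\theta_i}{\sum_{i\in\mathcal I_j}\gamma_i}$, $\bar\theta=\frac{\sum_{j=1}^k\sum_{i\in\mathcal I_j}\alpha_j\gamma_i\theta_i}{\sum_{j=1}^k\sum_{i\in\mathcal I_j}\alpha_j\gamma_i}$, and $$F(\Theta)=\sum_{j=1}^k\sum_{i\in\mathcal I_j}\Big(f_i(\theta_i)+\frac{(1-\alpha_j)\gamma_i}{2}\|\theta_i-\bar\theta_j\|^2+\frac{\alpha_j\gamma_i}{2}\|\theta_i-\bar\theta\|^2\Big).$$ *)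

(* Defs.v *)
From HB Require Import structures.
From mathcomp Require Import all_boot all_order all_algebra.
From mathcomp Require Import all_classical all_reals all_analysis.
Set Implicit Arguments. Unset Strict Implicit. Unset Printing Implicit Defensive.
Import Order.TTheory GRing.Theory Num.Theory.
Import numFieldNormedType.Exports.
Local Open Scope ring_scope.

Definition dotv (R : realType) (d : nat) (u v : 'rV[R]_d) : R :=
  \sum_(l < d) u 0 l * v 0 l.
Definition enorm (R : realType) (d : nat) (u : 'rV[R]_d) : R :=
  Num.sqrt (dotv u u).

Definition grad (R : realType) (d : nat) (f : 'rV[R]_d -> R) (x : 'rV[R]_d)
  : 'rV[R]_d := \row_(l < d) ('d f x (delta_mx 0 l : 'rV[R]_d)).

Definition differentiable_everywhere (R : realType) (d : nat)
  (f : 'rV[R]_d -> R) : Prop := forall x : 'rV[R]_d, differentiable f x.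

Definition strongly_convex (R : realType) (d : nat) (mu : R)
  (f : 'rV[R]_d -> R) : Prop :=
  forall (x y : 'rV[R]_d) (t : R), 0 <= t -> t <= 1 ->
    f (t *: x + (1 - t) *: y) <=
      t * f x + (1 - t) * f y - mu / 2 * t * (1 - t) * (enorm (x - y)) ^+ 2.

Definition L_smooth (R : realType) (d : nat) (L : R) (f : 'rV[R]_d -> R) : Prop :=
  differentiable_everywhere f /\
  forall x y : 'rV[R]_d, enorm (grad f x - grad f y) <= L * enorm (x - y).

(* clusters given by a map c : 'I_n -> 'I_k (client i lies in cluster I_(c i)) *)
Definition csum (R : realType) (n k : nat) (c : 'I_n -> 'I_k) (j : 'I_k)
  (g : 'I_n -> R) : R := \sum_(i < n | c i == j) g i.

Definition F_MTL (R : realType) (n k d : nat) (c : 'I_n -> 'I_k)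
  (f : 'I_n -> 'rV[R]_d -> R) (gamma : 'I_n -> R) (lambda : 'I_k -> R)
  (theta : 'I_n -> 'rV[R]_d) (w : 'I_k -> 'rV[R]_d) (wbar : 'rV[R]_d) : R :=
  \sum_(j < k) (csum c j (fun i => f i (theta i)
                    + gamma i / 2 * (enorm (theta i - w j)) ^+ 2)
                + lambda j / 2 * (enorm (w j - wbar)) ^+ 2).

Definition clavg (R : realType) (n k d : nat) (c : 'I_n -> 'I_k)
  (gamma : 'I_n -> R) (theta : 'I_n -> 'rV[R]_d) (j : 'I_k) : 'rV[R]_d :=
  (csum c j gamma)^-1 *: \sum_(i < n | c i == j) gamma i *: theta i.

Definition glavg (R : realType) (n k d : nat) (c : 'I_n -> 'I_k)
  (gamma : 'I_n -> R) (alpha : 'I_k -> R) (theta : 'I_n -> 'rV[R]_d) : 'rV[R]_d :=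
  (\sum_(i < n) alpha (c i) * gamma i)^-1 *:
     \sum_(i < n) (alpha (c i) * gamma i) *: theta i.

Definition F_obj (R : realType) (n k d : nat) (c : 'I_n -> 'I_k)
  (f : 'I_n -> 'rV[R]_d -> R) (gamma : 'I_n -> R) (alpha : 'I_k -> R)
  (theta : 'I_n -> 'rV[R]_d) : R :=
  \sum_(j < k) csum c j (fun i =>
     f i (theta i)
     + (1 - alpha j) * gamma i / 2 * (enorm (theta i - clavg c gamma theta j)) ^+ 2
     + alpha j * gamma i / 2 * (enorm (theta i - glavg c gamma alpha theta)) ^+ 2).

Definition alpha_of (R : realType) (n k : nat) (c : 'I_n -> 'I_k)
  (gamma : 'I_n -> R) (lambda : 'I_k -> R) (j : 'I_k) : R :=
  lambda j / (lambda j + csum c j gamma).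

(* Main.v *)
Require Import Defs.
From HB Require Import structures.
From mathcomp Require Import all_boot all_order all_algebra.
From mathcomp Require Import all_classical all_reals all_analysis.
From mathcomp Require Import ring lra.
Import Order.TTheory GRing.Theory Num.Theory.
Import numFieldNormedType.Exports.
Local Open Scope ring_scope.

Section H.
Variable R : realType.
Variable d : nat.
Implicit Types x y w : 'rV[R]_d.

Lemma dotvE x y : dotv x y = \sum_(l < d) x 0 l * y 0 l.
Proof. by []. Qed.

Lemma dotv_ge0 x : 0 <= dotv x x.
Proof. rewrite /dotv; apply: sumr_ge0 => l _; rewrite -expr2; exact: sqr_ge0. Qed.

Lemma enorm2 x : enorm x ^+ 2 = dotv x x.
Proof. by rewrite /enorm sqr_sqrtr // dotv_ge0. Qed.

Lemma dotv_eq0 x : dotv x x = 0 -> x = 0.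
Proof.
move=> /eqP; rewrite /dotv psumr_eq0 => [/allP H|l _]; last by rewrite -expr2 sqr_ge0.
apply/rowP => l; rewrite mxE.
have := H l (mem_index_enum _); rewrite /= mulf_eq0 orbb => /eqP //.
Qed.

Lemma sdecomp (I : finType) (P : pred I) (g y : I -> R) (w : R) :
  \sum_(i | P i) g i != 0 ->
  \sum_(i | P i) g i * (y i - w)^+2 =
  \sum_(i | P i) g i * (y i - (\sum_(i | P i) g i)^-1 * \sum_(i | P i) g i * y i)^+2
  + (\sum_(i | P i) g i) * ((\sum_(i | P i) g i)^-1 * \sum_(i | P i) g i * y i - w)^+2.
Proof.
set G := \sum_(i | P i) g i; set S := \sum_(i | P i) g i * y i => G0.
set b := G^-1 * S.
have hS : S = G * b by rewrite /b mulrA divff // mul1r.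
transitivity (\sum_(i | P i) (g i * (y i - b)^+2 + (2*(b-w)) * (g i * y i) - (b^+2-w^+2) * g i)).
  by apply: eq_bigr => i _; ring.
rewrite sumrB big_split /= -!mulr_sumr -/S -/G hS; ring.
Qed.

Lemma vdecomp (I : finType) (P : pred I) (g : I -> R) (x : I -> 'rV[R]_d) w :
  \sum_(i | P i) g i != 0 ->
  \sum_(i | P i) g i * dotv (x i - w) (x i - w) =
  \sum_(i | P i) g i * dotv (x i - (\sum_(i | P i) g i)^-1 *: \sum_(i | P i) g i *: x i)
                            (x i - (\sum_(i | P i) g i)^-1 *: \sum_(i | P i) g i *: x i)
  + (\sum_(i | P i) g i) * dotv ((\sum_(i | P i) g i)^-1 *: (\sum_(i | P i) g i *: x i) - w)
                            ((\sum_(i | P i) g i)^-1 *: (\sum_(i | P i) g i *: x i) - w).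
Proof.
move=> G0; rewrite /dotv.
under eq_bigr do rewrite mulr_sumr.
rewrite exchange_big /=.
under [X in _ = X + _]eq_bigr do rewrite mulr_sumr.
rewrite [X in _ = X + _]exchange_big /= mulr_sumr -big_split /=.
apply: eq_bigr => l _.
rewrite [LHS](eq_bigr (fun i => g i * (x i 0 l - w 0 l)^+2)); last first.
  by move=> i _; rewrite !mxE expr2.
rewrite (@sdecomp _ _ _ (fun i => x i 0 l) (w 0 l) G0).
congr (_ + _).
  apply: eq_bigr => i _; rewrite !mxE summxE expr2; congr (_ * ((_ - _ * _) * (_ - _ * _)));
  by apply: eq_bigr => j _; rewrite mxE.
rewrite !mxE summxE expr2; congr (_ * ((_ * _ - _) * (_ * _ - _)));
  by apply: eq_bigr => j _; rewrite mxE.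
Qed.

Lemma tp (G lam : R) (b w v : 'rV[R]_d) : lam + G != 0 ->
  G * dotv (b - w) (b - w) + lam * dotv (w - v) (w - v) =
  G * lam / (lam + G) * dotv (b - v) (b - v) +
  (lam + G) * dotv ((lam + G)^-1 *: (G *: b + lam *: v) - w)
                   ((lam + G)^-1 *: (G *: b + lam *: v) - w).
Proof.
move=> S0; rewrite /dotv !mulr_sumr -!big_split; apply: eq_bigr => l _.
rewrite /= !mxE; field => //.
Qed.

Lemma midq (x1 x2 y1 y2 : 'rV[R]_d) :
  dotv ((2^-1 *: x1 + (1 - 2^-1) *: x2) - (2^-1 *: y1 + (1 - 2^-1) *: y2))
       ((2^-1 *: x1 + (1 - 2^-1) *: x2) - (2^-1 *: y1 + (1 - 2^-1) *: y2))
  <= 2^-1 * dotv (x1 - y1) (x1 - y1) + 2^-1 * dotv (x2 - y2) (x2 - y2).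
Proof.
rewrite /dotv !mulr_sumr -big_split; apply: ler_sum => l _; rewrite !mxE.
rewrite -subr_ge0.
set a := x1 0 l - y1 0 l; set e := x2 0 l - y2 0 l.
have -> : 2^-1 * ((x1 0 l - y1 0 l) * (x1 0 l - y1 0 l)) + 2^-1 * ((x2 0 l - y2 0 l) * (x2 0 l - y2 0 l)) -
  (2^-1 * x1 0 l + (1 - 2^-1) * x2 0 l - (2^-1 * y1 0 l + (1 - 2^-1) * y2 0 l)) *
  (2^-1 * x1 0 l + (1 - 2^-1) * x2 0 l - (2^-1 * y1 0 l + (1 - 2^-1) * y2 0 l))
  = (2^-1 * (a - e))^+2 by rewrite /a /e; field.
exact: sqr_ge0.
Qed.
End H.
Section Main.
Variables (R : realType) (n k d : nat) (c : 'I_n -> 'I_k) (f : 'I_n -> 'rV[R]_d -> R)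
  (gamma : 'I_n -> R) (lambda : 'I_k -> R).
Hypothesis hG : forall j, 0 < csum c j gamma.
Hypothesis hl : forall j, 0 <= lambda j.
Local Notation q x := (dotv x x).
Local Notation alpha := (alpha_of c gamma lambda).

Definition mopt (theta : 'I_n -> 'rV[R]_d) (v : 'rV[R]_d) j :=
  (lambda j + csum c j gamma)^-1 *: (csum c j gamma *: clavg c gamma theta j + lambda j *: v).

Lemma cluster_id theta (w : 'I_k -> 'rV[R]_d) v j :
  csum c j (fun i => f i (theta i) + gamma i / 2 * enorm (theta i - w j) ^+ 2)
    + lambda j / 2 * enorm (w j - v) ^+ 2
  = csum c j (fun i => f i (theta i)
       + (1 - alpha j) * gamma i / 2 * enorm (theta i - clavg c gamma theta j) ^+ 2
       + alpha j * gamma i / 2 * enorm (theta i - glavg c gamma alpha theta) ^+ 2)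
  + (lambda j + csum c j gamma) / 2 * q (mopt theta v j - w j)
  + alpha j / 2 * (\sum_(i < n | c i == j) gamma i * q (theta i - v)
                  - \sum_(i < n | c i == j) gamma i * q (theta i - glavg c gamma alpha theta)).
Proof.
have G0 : csum c j gamma != 0 := lt0r_neq0 (hG j).
have S0 : lambda j + csum c j gamma != 0 := lt0r_neq0 (ltr_wpDl (hl j) (hG j)).
set G := csum c j gamma.
set b := clavg c gamma theta j.
set B := glavg c gamma alpha theta.
have hX : \sum_(i < n | c i == j) gamma i * q (theta i - w j) =
   \sum_(i < n | c i == j) gamma i * q (theta i - b) + G * q (b - w j).
  exact: vdecomp.
have hV : \sum_(i < n | c i == j) gamma i * q (theta i - v) =
   \sum_(i < n | c i == j) gamma i * q (theta i - b) + G * q (b - v).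
  exact: vdecomp.
have hT := @tp R d G (lambda j) b (w j) v S0.
have E1 : csum c j (fun i => f i (theta i) + gamma i / 2 * enorm (theta i - w j) ^+ 2) =
   csum c j (fun i => f i (theta i)) + 2^-1 * \sum_(i < n | c i == j) gamma i * q (theta i - w j).
  rewrite /csum big_split /= mulr_sumr; congr (_ + _); apply: eq_bigr => i _.
  by rewrite enorm2; ring.
have E2 : csum c j (fun i => f i (theta i)
       + (1 - alpha j) * gamma i / 2 * enorm (theta i - b) ^+ 2
       + alpha j * gamma i / 2 * enorm (theta i - B) ^+ 2) =
   csum c j (fun i => f i (theta i)) + (1 - alpha j) / 2 * \sum_(i < n | c i == j) gamma i * q (theta i - b)
   + alpha j / 2 * \sum_(i < n | c i == j) gamma i * q (theta i - B).
  rewrite /csum !big_split /= !mulr_sumr; congr (_ + _ + _); apply: eq_bigr => i _.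
    by rewrite enorm2; ring.
  by rewrite enorm2; ring.
have hq : q (mopt theta v j - w j) =
   (G * q (b - w j) + lambda j * q (w j - v) - G * lambda j / (lambda j + G) * q (b - v))
     / (lambda j + G).
  by rewrite hT /mopt -/G -/b; field.
rewrite E1 E2 hX hV hq enorm2 /alpha_of -/G.
by field.
Qed.


Lemma regroup (F : 'I_n -> R) :
  \sum_(j < k) \sum_(i < n | c i == j) F i = \sum_(i < n) F i.
Proof. by symmetry; exact: (partition_big c predT). Qed.

Lemma full_id theta w v :
  \sum_(i < n) alpha (c i) * gamma i != 0 ->
  F_MTL c f gamma lambda theta w v = F_obj c f gamma alpha theta
   + \sum_(j < k) (lambda j + csum c j gamma) / 2 * q (mopt theta v j - w j)
   + 2^-1 * ((\sum_(i < n) alpha (c i) * gamma i) * q (glavg c gamma alpha theta - v)).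
Proof.
move=> hA.
set B := glavg c gamma alpha theta.
rewrite /F_MTL (eq_bigr _ (fun j _ => cluster_id theta w v j)).
rewrite !big_split /= -/B.
have E3 : \sum_(j < k) alpha j / 2 * (\sum_(i < n | c i == j) gamma i * q (theta i - v)
                  - \sum_(i < n | c i == j) gamma i * q (theta i - B))
   = 2^-1 * (\sum_(i < n) alpha (c i) * gamma i * q (theta i - v)
             - \sum_(i < n) alpha (c i) * gamma i * q (theta i - B)).
  rewrite -!regroup -sumrB mulr_sumr; apply: eq_bigr => j _.
  have e1 : forall u, \sum_(i < n | c i == j) alpha (c i) * gamma i * q (theta i - u) =
      alpha j * \sum_(i < n | c i == j) gamma i * q (theta i - u).
    by move=> u; rewrite mulr_sumr; apply: eq_bigr => i /eqP ->; ring.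
  rewrite !e1.
  ring.
have hD : \sum_(i < n) alpha (c i) * gamma i * q (theta i - v) =
   \sum_(i < n) alpha (c i) * gamma i * q (theta i - B)
   + (\sum_(i < n) alpha (c i) * gamma i) * q (B - v).
  exact: (@vdecomp R d _ xpredT (fun i => alpha (c i) * gamma i) theta v hA).
rewrite E3 hD /F_obj -/B; ring.
Qed.


Lemma lin3 (I : finType) (P : pred I) (a b e : R) (X Y Z : I -> R) :
  \sum_(i | P i) (a * X i + b * Y i - e * Z i) =
  a * \sum_(i | P i) X i + b * \sum_(i | P i) Y i - e * \sum_(i | P i) Z i.
Proof. by rewrite sumrB big_split /= -!mulr_sumr. Qed.

Definition mid (x y : 'rV[R]_d) := 2^-1 *: x + (1 - 2^-1) *: y.

Lemma conv_MTL (mu : R) : (forall i, 0 <= gamma i) ->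
  (forall i, strongly_convex mu (f i)) -> forall th1 w1 v1 th2 w2 v2,
  F_MTL c f gamma lambda (fun i => mid (th1 i) (th2 i)) (fun j => mid (w1 j) (w2 j)) (mid v1 v2)
  <= 2^-1 * F_MTL c f gamma lambda th1 w1 v1 + 2^-1 * F_MTL c f gamma lambda th2 w2 v2
     - mu / 8 * \sum_(j < k) csum c j (fun i => q (th1 i - th2 i)).
Proof.
move=> hg hsc th1 w1 v1 th2 w2 v2.
rewrite /F_MTL -lin3; apply: ler_sum => j _.
have hc : csum c j (fun i => f i (mid (th1 i) (th2 i)) + gamma i / 2 * enorm (mid (th1 i) (th2 i) - mid (w1 j) (w2 j)) ^+ 2)
  <= 2^-1 * csum c j (fun i => f i (th1 i) + gamma i / 2 * enorm (th1 i - w1 j) ^+ 2)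
   + 2^-1 * csum c j (fun i => f i (th2 i) + gamma i / 2 * enorm (th2 i - w2 j) ^+ 2)
   - mu / 8 * csum c j (fun i => q (th1 i - th2 i)).
  rewrite /csum -lin3; apply: ler_sum => i _.
  have h1 := hsc i (th1 i) (th2 i) (2^-1) ltac:(lra) ltac:(lra).
  have h2 := @midq R d (th1 i) (th2 i) (w1 j) (w2 j).
  have g0 : 0 <= gamma i / 2 by apply: divr_ge0 => //; exact: hg.
  have h3 := ler_wpM2l g0 h2.
  rewrite /mid !enorm2 in h1 h3 *.
  move: h1 h3; set Q := dotv (th1 i - th2 i) (th1 i - th2 i).
  set A := f i _; set B1 := dotv _ _; set B2 := dotv (th1 i - w1 j) _; set B3 := dotv (th2 i - w2 j) _.
  nra.
have h2 := @midq R d (w1 j) (w2 j) v1 v2.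
have l0 : 0 <= lambda j / 2 by apply: divr_ge0 => //; exact: hl.
have h3 := ler_wpM2l l0 h2.
rewrite /mid !enorm2 in hc h3 *.
lra.
Qed.


Lemma q0 : q (0 : 'rV[R]_d) = 0.
Proof. by rewrite /dotv big1 // => l _; rewrite mxE mul0r. Qed.

Lemma main_sec (mu : R) (thetap : 'I_n -> 'rV[R]_d) (what : 'I_k -> 'rV[R]_d)
  (wbarhat : 'rV[R]_d) (thetahat : 'I_n -> 'rV[R]_d) :
  0 < mu -> (forall i, strongly_convex mu (f i)) ->
  (forall i, 0 < gamma i) ->
  \sum_(i < n) alpha (c i) * gamma i != 0 ->
  (forall theta w wbar,
     F_MTL c f gamma lambda thetap what wbarhat <= F_MTL c f gamma lambda theta w wbar) ->
  (forall theta,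
     F_obj c f gamma alpha thetahat <= F_obj c f gamma alpha theta) ->
  forall i, thetahat i = thetap i.
Proof.
move=> mu0 hsc hg hA hMTL hobj.
have hg' : forall i, 0 <= gamma i by move=> i; exact: ltW.
have a0 : forall j, 0 <= alpha j.
  move=> j; rewrite /alpha_of divr_ge0 //; rewrite addr_ge0 //; exact: ltW.
have hA0 : 0 <= \sum_(i < n) alpha (c i) * gamma i.
  by apply: sumr_ge0 => i _; rewrite mulr_ge0.
set Bh := glavg c gamma alpha thetahat.
have Eh : F_MTL c f gamma lambda thetahat (mopt thetahat Bh) Bh = F_obj c f gamma alpha thetahat.
  rewrite (full_id _ _ _ hA) -/Bh subrr q0 mulr0 mulr0 addr0 big1 ?addr0 // => j _.
  by rewrite subrr q0 mulr0.
have Ip : F_obj c f gamma alpha thetap <= F_MTL c f gamma lambda thetap what wbarhat.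
  rewrite (full_id _ _ _ hA) -addrA lerDl; apply: addr_ge0.
    apply: sumr_ge0 => j _; apply: mulr_ge0; last exact: dotv_ge0.
    apply: divr_ge0 => //; apply: addr_ge0 => //; exact: ltW.
  by rewrite mulr_ge0 // mulr_ge0 // dotv_ge0.
have hc := conv_MTL mu hg' hsc thetahat (mopt thetahat Bh) Bh thetap what wbarhat.
have hm := hMTL (fun i => mid (thetahat i) (thetap i)) (fun j => mid (mopt thetahat Bh j) (what j))
   (mid Bh wbarhat).
have ho := hobj thetap.
set S := \sum_(j < k) csum c j (fun i => q (thetahat i - thetap i)) in hc.
have S0 : 0 <= S.
  apply: sumr_ge0 => j _; apply: sumr_ge0 => i _; exact: dotv_ge0.
have hmS : mu / 8 * S <= 0 by lra.
have S1 : S <= 0 by rewrite pmulr_rle0 // in hmS; rewrite divr_gt0.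
have S2 : S = 0 by apply/eqP; rewrite eq_le S1 S0.
have hS : forall j : 'I_k, csum c j (fun i => q (thetahat i - thetap i)) = 0.
  move=> j; apply: (psumr_eq0P _ S2) => // j' _; apply: sumr_ge0 => i _; exact: dotv_ge0.
move=> i.
have := hS (c i).
move=> /eqP; rewrite /csum psumr_eq0 => [/allP H|l _]; last exact: dotv_ge0.
have := H i (mem_index_enum _); rewrite /= eqxx /= => /eqP /dotv_eq0 /eqP.
by rewrite subr_eq0 => /eqP.
Qed.

End Main.

Theorem proposition2p1 (R : realType) (n k d : nat) (c : 'I_n -> 'I_k)
  (f : 'I_n -> 'rV[R]_d -> R) (mu L : R) (gamma : 'I_n -> R) (lambda : 'I_k -> R)
  (thetap : 'I_n -> 'rV[R]_d) (what : 'I_k -> 'rV[R]_d) (wbarhat : 'rV[R]_d)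
  (thetahat : 'I_n -> 'rV[R]_d) :
  (0 < d)%N ->
  (forall j : 'I_k, exists i : 'I_n, c i = j) ->
  0 < mu -> mu <= L ->
  (forall i, differentiable_everywhere (f i)) ->
  (forall i, strongly_convex mu (f i)) ->
  (forall i, L_smooth L (f i)) ->
  (forall i, 0 < gamma i) ->
  (forall j, 0 <= lambda j) ->
  (exists j, lambda j != 0) ->
  (forall theta w wbar,
     F_MTL c f gamma lambda thetap what wbarhat <= F_MTL c f gamma lambda theta w wbar) ->
  (forall theta,
     F_obj c f gamma (alpha_of c gamma lambda) thetahat
       <= F_obj c f gamma (alpha_of c gamma lambda) theta) ->
  forall i, thetahat i = thetap i.
Proof.
move=> _ hsurj mu0 _ _ hsc _ hg hl [j0 hj0] hMTL hobj.
have hG : forall j, 0 < csum c j gamma.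
  move=> j; have [i0 hi0] := hsurj j.
  rewrite /csum (bigD1 i0) ?hi0 //=.
  apply: (lt_le_trans (hg i0)); rewrite lerDl.
  by apply: sumr_ge0 => i _; exact: ltW.
have a0 : forall j, 0 <= alpha_of c gamma lambda j.
  move=> j; rewrite /alpha_of divr_ge0 //; rewrite addr_ge0 //; exact: ltW.
have hA : \sum_(i < n) alpha_of c gamma lambda (c i) * gamma i != 0.
  apply: lt0r_neq0; have [i0 hi0] := hsurj j0.
  rewrite (bigD1 i0) //=.
  apply: (@lt_le_trans _ _ (alpha_of c gamma lambda (c i0) * gamma i0)).
    apply: mulr_gt0 => //; rewrite hi0 /alpha_of divr_gt0 //.
      by rewrite lt_neqAle eq_sym hj0 hl.
    by apply: ltr_wpDl => //; exact: hG.
  rewrite lerDl; apply: sumr_ge0 => i _; apply: mulr_ge0 => //; exact: ltW.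
exact: (@main_sec _ _ _ _ _ _ _ _ hG hl _ _ _ _ _ mu0 hsc hg hA hMTL hobj).
Qed.
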